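(* Let $c>0$ be a constant. There is a constant $C>0$ (depending only on $c$) such that the following holds. Let $Q$ be a set of at most $n$ integers, each of absolute value at most $2^{cn}$, and let $1\le k\le |Q|$ be such that $\left|w\left(\binom{Q}{k}\right)\right|\ge |w(2^Q)|/|Q|$. Let $X$ be a real number with $4\le X\le |w(2^Q)|$ and let $p$ be a uniformly random prime in $[X/2,X]$. Then with probability at least $9/10$ over the choice of $p$, \[\left|\left\{a\in\mathbb{Z}_p \colon \text{there exists } M'\subseteq Q,\ |M'|=k,\ w(M')\equiv a \pmod p\right\}\right|\ \ge\ \frac{p}{C n^2}.\]
   Context: For a finite set of integers $S$, $w(S)=\sum_{a\in S}a$; $2^S$ is the set of all subsets of $S$; $\binom{S}{k}$ is the set of all $k$-element subsets of $S$; for a family $\mathcal F$ of sets, $w(\mathcal F)=\{w(A)\colon A\in\mathcal F\}$ (a set of distinct integers). $\mathbb Z_p$ is the set of residues modulo $p$. *)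

(* Defs.v *)
From mathcomp Require Import all_boot all_order all_algebra.
From mathcomp Require Import reals exp.
Set Implicit Arguments. Unset Strict Implicit. Unset Printing Implicit Defensive.
Import Order.TTheory GRing.Theory Num.Theory.
Local Open Scope ring_scope.

(* A finite set Q of integers is represented by a duplicate-free list;
   its subsets are the index sets A : {set 'I_(size Q)}. *)

Definition wsub (Q : seq int) (A : {set 'I_(size Q)}) : int :=
  \sum_(i in A) Q`_i.

Definition wpow (Q : seq int) : seq int :=
  undup [seq wsub A | A : {set 'I_(size Q)}].

Definition wbinom (Q : seq int) (k : nat) : seq int :=
  undup [seq wsub A | A in [pred A : {set 'I_(size Q)} | #|A| == k]].

(* { a in Z_p : exists M' subset Q, |M'| = k, w(M') = a mod p },
   residues represented by their canonical representatives in [0, p) *)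
Definition kres (Q : seq int) (k p : nat) : seq int :=
  undup [seq (wsub A %% p%:Z)%Z | A in [pred A : {set 'I_(size Q)} | #|A| == k]].

Definition primes_in (R : realType) (X : R) : seq nat :=
  [seq p <- iota 0 (Num.truncn X).+1 |
     prime p && (X / 2 <= p%:R) && (p%:R <= X)].

(* Main.v *)
Require Import Defs.
From mathcomp Require Import all_boot all_order all_algebra.
From mathcomp Require Import reals exp.
From mathcomp Require Import zify ring.
Set Implicit Arguments. Unset Strict Implicit. Unset Printing Implicit Defensive.
Import Order.TTheory GRing.Theory Num.Theory.

Lemma sum_bin n : \sum_(i < n.+1) 'C(n, i) = 2 ^ n.
Proof.
have := expnDn 1 1 n; rewrite addn1 => ->.
by apply: eq_bigr => i _; rewrite !exp1n !muln1.
Qed.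

Lemma bin_odd_le m : 'C(m.*2.+1, m) <= 4 ^ m.
Proof.
have H := sum_bin m.*2.+1.
rewrite -(big_mkord predT (fun i => 'C(m.*2.+1, i))) in H.
have Hs : 'C(m.*2.+1, m) + 'C(m.*2.+1, m.+1) <= 2 ^ m.*2.+1.
  rewrite -H (@big_cat_nat _ _ _ m) /=; [|lia|lia].
  rewrite (@big_cat_nat _ _ _ m.+2 m) /=; [|lia|lia].
  rewrite (@big_cat_nat _ _ _ m.+1 m) /=; [|lia|lia].
  rewrite !big_nat1. lia.
have Heq : 'C(m.*2.+1, m.+1) = 'C(m.*2.+1, m).
  rewrite -bin_sub; last by lia.
  by congr 'C(_,_); lia.
rewrite Heq expnS in Hs.
have -> : 4 ^ m = 2 ^ m.*2 by rewrite -mul2n expnM.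
move: Hs; set E := 2 ^ m.*2; set B := 'C(_, _); lia.
Qed.

Lemma prime_dvd_fact p n : prime p -> p %| n`! -> p <= n.
Proof.
move=> pp; rewrite fact_prod Euclid_dvd_prod // big_has => /hasP [i].
rewrite mem_index_iota => /andP [i1 i2] /dvdn_leq; lia.
Qed.

Lemma prod_primes_dvd (r : seq nat) (P : pred nat) N :
  uniq r -> (forall p, p \in r -> P p -> prime p /\ p %| N) ->
  \prod_(p <- r | P p) p %| N.
Proof.
elim: r => [|x r IH] /=; first by rewrite big_nil dvd1n.
move=> /andP [xr ur] H; rewrite big_cons.
have IH' := IH ur (fun p pr Pp => H p (mem_behead (s:=x::r) pr) Pp).
case Px: (P x) => //.
have [px dx] := H x (mem_head _ _) Px.
rewrite Gauss_dvd ?dx ?IH' //.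
rewrite prime_coprime // Euclid_dvd_prod // big_has_cond.
apply/hasP => [[y yr /andP [Py]]].
have [py _] := H y (mem_behead (s:=x::r) yr) Py.
rewrite dvdn_prime2 // => /eqP exy; subst y; by rewrite yr in xr.
Qed.

Definition prim x := \prod_(0 <= p < x.+1 | prime p) p.

Lemma prim_split m n : m <= n -> prim n = prim m * \prod_(m.+1 <= p < n.+1 | prime p) p.
Proof. by move=> h; rewrite /prim (@big_cat_nat _ _ _ m.+1) //=; lia. Qed.

Lemma prod_mid_dvd m :
  \prod_(m.+2 <= p < m.*2.+2 | prime p) p %| 'C(m.*2.+1, m).
Proof.
apply: prod_primes_dvd; first exact: iota_uniq.
move=> p; rewrite mem_index_iota => /andP [h1 h2] pp; split => //.
have e : m.*2.+1 - m = m.+1 by lia.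
have hb := @bin_fact m.*2.+1 m ltac:(lia).
rewrite e in hb.
have hd : p %| (m.*2.+1)`! by apply: dvdn_fact; lia.
rewrite -hb Gauss_dvdl // in hd.
rewrite prime_coprime // Euclid_dvdM //; apply/negP => /orP [] /(prime_dvd_fact pp); lia.
Qed.

Lemma prim_le x : prim x <= 4 ^ x.
Proof.
elim/ltn_ind: x => x IH.
have Hx := odd_double_half x.
set m := x./2 in Hx.
case: (ltnP x 3) => hx3.
  case: x hx3 {IH Hx m} => [|[|[|x]]] // _; by rewrite /prim unlock.
case ox: (odd x) Hx => /= Hx.
-
  have hm : m.+1 <= x by lia.
  rewrite (prim_split hm).
  have h1 : prim m.+1 <= 4 ^ m.+1 by apply: IH; lia.
  have h2 : \prod_(m.+2 <= p < x.+1 | prime p) p <= 4 ^ m.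
    apply: leq_trans (bin_odd_le m).
    apply: dvdn_leq; first by rewrite bin_gt0; lia.
    by rewrite -Hx add1n; apply: prod_mid_dvd.
  have -> : 4 ^ x = 4 ^ m.+1 * 4 ^ m by rewrite -expnD; congr (_ ^ _); lia.
  exact: leq_mul.
-
  have hxx : x.-1 <= x by lia.
  rewrite (prim_split hxx) big_mkcond /= (_ : x.-1.+1 = x); last lia.
  rewrite big_nat1.
  have -> : prime x = false.
    apply/negP => px.
    have : 2 %| x by rewrite -Hx add0n dvdn2 odd_double.
    by rewrite dvdn_prime2 // => /eqP ex; rewrite -ex in hx3.
  rewrite muln1.
  apply: leq_trans (IH x.-1 _) _; first lia.
  apply: leq_pexp2l => //; lia.
Qed.

Lemma div_double a q : 0 < q -> a.*2 %/ q = (a %/ q).*2 + (a %% q).*2 %/ q.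
Proof.
move=> q0; rewrite {1}(divn_eq a q) doubleD -!mul2n mulnA divnMDl //.
Qed.

Lemma logn_fact_ext p a : prime p ->
  logn p a`! = \sum_(1 <= k < a.*2.+1) a %/ p ^ k.
Proof.
move=> pp; rewrite logn_fact // (@big_cat_nat _ _ _ a.+1 1 a.*2.+1) /=; [|lia|lia].
rewrite [X in _ + X]big1_seq ?addn0 // => k /andP [_].
rewrite mem_index_iota => /andP [h1 _].
apply: divn_small; apply: leq_trans h1 _.
apply: ltnW; apply: leq_trans (ltn_expl k (prime_gt1 pp)); lia.
Qed.

Lemma v_bin p a : prime p ->
  logn p 'C(a.*2, a) = \sum_(1 <= k < a.*2.+1) (a %% p ^ k).*2 %/ p ^ k.
Proof.
move=> pp.
have hb := @bin_fact a.*2 a ltac:(lia).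
have e : a.*2 - a = a by lia.
rewrite e in hb.
have hl : logn p (a.*2)`! = logn p 'C(a.*2, a) + (logn p a`! + logn p a`!).
  by rewrite -hb !lognM ?fact_gt0 ?bin_gt0 ?muln_gt0 ?fact_gt0 //; lia.
have H2 : logn p (a.*2)`! = \sum_(1 <= k < a.*2.+1) ((a %% p ^ k).*2 %/ p ^ k)
            + (logn p a`! + logn p a`!).
  rewrite [logn p (a.*2)`!]logn_fact // !logn_fact_ext // -!big_split /=.
  apply: eq_bigr => k _; rewrite div_double ?expn_gt0 ?prime_gt0 //; lia.
lia.
Qed.

Lemma h_le1 a q : 0 < q -> (a %% q).*2 %/ q <= 1.
Proof.
move=> q0; rewrite -ltnS ltn_divLR //; have := ltn_pmod a q0; lia.
Qed.

Lemma h_eq0 a q : 0 < q -> a.*2 < q -> (a %% q).*2 %/ q = 0.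
Proof.
move=> q0 h; apply: divn_small; have := leq_mod a q; lia.
Qed.

Lemma sum_ind_le0 m N T (P : pred nat) :
  (forall k, m <= k < N -> P k -> k < T) ->
  \sum_(m <= k < N | P k) 1 <= minn (N - m) (T - m).
Proof.
elim: N => [|N IH] H; first by rewrite big_geq.
case: (leqP m N) => hmN; last by rewrite big_geq //; lia.
rewrite big_mkcond big_nat_recr //= -big_mkcond.
have IH' := IH (fun k hk => H k ltac:(lia)).
case PN: (P N) => /=; last by rewrite addn0; lia.
have := H N ltac:(lia) PN; lia.
Qed.

Lemma sum_ind_le m N T (P : pred nat) :
  (forall k, m <= k < N -> P k -> k < T) ->
  \sum_(m <= k < N | P k) 1 <= T - m.
Proof. move=> H; have := sum_ind_le0 H; lia. Qed.

Lemma v_le_trunc p a : prime p -> 0 < a ->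
  logn p 'C(a.*2, a) <= trunc_log p a.*2.
Proof.
move=> pp a0; rewrite v_bin //.
apply: leq_trans (_ : _ <= \sum_(1 <= k < a.*2.+1 | p ^ k <= a.*2) 1) _.
  rewrite [X in _ <= X]big_mkcond /=; apply: leq_sum => k _.
  have q0 : 0 < p ^ k by rewrite expn_gt0 prime_gt0.
  case: ifP => h; first exact: h_le1.
  by rewrite h_eq0 //; lia.
apply: leq_trans (sum_ind_le (T := (trunc_log p a.*2).+1) _) _; last lia.
move=> k _ hk; rewrite ltnS; apply: trunc_log_max => //; exact: prime_gt1.
Qed.

Lemma F1 p a : prime p -> 0 < a -> p ^ logn p 'C(a.*2, a) <= a.*2.
Proof.
move=> pp a0; apply: leq_trans (trunc_logP (prime_gt1 pp) (_ : 0 < a.*2)); last lia.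
apply: leq_pexp2l; [exact: prime_gt0 | exact: v_le_trunc].
Qed.

Lemma F2 p a : prime p -> 0 < a -> a.*2 < p * p -> logn p 'C(a.*2, a) <= 1.
Proof.
move=> pp a0 h; apply: leq_trans (v_le_trunc pp a0) _.
have h1 := trunc_logP (prime_gt1 pp) (_ : 0 < a.*2).
have : p ^ trunc_log p a.*2 < p ^ 2 by rewrite expnS expn1; apply: leq_ltn_trans h; apply: h1; lia.
rewrite ltn_exp2l ?prime_gt1 //; lia.
Qed.

Lemma F3 p a : prime p -> a.*2 < p * p -> a.*2 < 3 * p -> p <= a ->
  logn p 'C(a.*2, a) = 0.
Proof.
move=> pp h1 h2 h3; rewrite v_bin //; apply: big1_seq => k /andP [_].
rewrite mem_index_iota => /andP [k1 _].
have p0 := prime_gt0 pp.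
case: (ltnP k 2) => hk.
  have -> : k = 1 by lia.
  rewrite expn1.
  have -> : a %% p = a - p.
    have e : a = (a - p) + p by lia.
    rewrite {1}e modnDr modn_small //; lia.
  apply: divn_small; lia.
apply: h_eq0; first by rewrite expn_gt0 p0.
apply: leq_trans h1 _; have := leq_pexp2l p0 hk; rewrite expnS expn1 //.
Qed.

Lemma central_lb a : 4 ^ a <= a.*2.+1 * 'C(a.*2, a).
Proof.
elim: a => [|a IH]; first by rewrite bin0.
have e1 := mul_bin_diag a.*2.+1 a.
have e2 := mul_bin_diag a.*2.+2 a.
have e3 : 'C(a.*2.+1, a.+1) = 'C(a.*2.+1, a).
  by rewrite -bin_sub; [congr 'C(_,_); lia | lia].
rewrite /= e3 in e1; rewrite /= in e2.
have -> : (a.+1).*2 = a.*2.+2 by lia.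
move: IH e1 e2; set x := 'C(a.*2, a); set y := 'C(a.*2.+1, a); set z := 'C(a.*2.+2, a.+1).
rewrite expnS => IH e1 e2.
have ez : z = 2 * y by nia.
nia.
Qed.

Definition gg a p :=
  if prime p then
    (if p * p <= a.*2 then a.*2 else if 3 * p <= a.*2 then p
     else if p <= a then 1 else if p <= a.*2 then a.*2 else 1)
  else 1.

Lemma fact_le_gg a p : 2 < a -> p ^ logn p 'C(a.*2, a) <= gg a p.
Proof.
move=> a2; rewrite /gg.
case pp: (prime p); last first.
  by rewrite lognE pp.
have a0 : 0 < a by lia.
have p1 := prime_gt1 pp.
have hF1 := F1 pp a0.
case: ifP => h1 //; case: ifP => h2.
  have hv := F2 pp a0 (_ : a.*2 < p * p).
  have hv' := hv ltac:(lia).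
  case: (logn p 'C(a.*2, a)) hv' => [|[|n]] hv' //; rewrite ?expn1 //; lia.
case: ifP => h3; first by rewrite F3 //; lia.
case: ifP => h4 //.
have : logn p 'C(a.*2, a) = 0.
  move: hF1; case: (logn p _) => // n; rewrite expnS => h.
  have : 0 < p ^ n by rewrite expn_gt0; lia.
  nia.
by move=> ->.
Qed.

Lemma gg_gt0 a p : 0 < a -> 0 < gg a p.
Proof.
move=> a0; rewrite /gg; case: ifP => pp //; have := prime_gt0 pp.
repeat case: ifP => //; lia.
Qed.

Lemma gg_big a p : a.*2 < p -> gg a p = 1.
Proof.
move=> h; rewrite /gg; case: ifP => // pp.
case: ifP => h1; first nia.
case: ifP => h2; first lia.
case: ifP => h3; first lia.
case: ifP => h4 //; lia.
Qed.

Lemma bin_le_prod_gg a : 2 < a -> 'C(a.*2, a) <= \prod_(0 <= p < a.*2.+1) gg a p.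
Proof.
move=> a2.
set C := 'C(a.*2, a).
have C0 : 0 < C by rewrite bin_gt0; lia.
rewrite -{1}(partnT C0) /partn.
apply: leq_trans (_ : _ <= \prod_(0 <= p < C.+1) gg a p) _.
  by apply: leq_prod => p _; apply: fact_le_gg.
case: (leqP C.+1 a.*2.+1) => hN.
  rewrite (@big_cat_nat _ _ _ C.+1 0 a.*2.+1) //=.
  apply: leq_pmulr; rewrite prodn_gt0 // => p; apply: gg_gt0; lia.
rewrite (@big_cat_nat _ _ _ a.*2.+1 0 C.+1) //=; [|lia].
rewrite [X in _ * X <= _]big1_seq ?muln1 // => p /andP [_].
rewrite mem_index_iota => /andP [h _]; apply: gg_big; lia.
Qed.

Lemma prod_const_cond (r : seq nat) (P : pred nat) c :
  \prod_(p <- r) (if P p then c else 1) = c ^ (\sum_(p <- r | P p) 1).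
Proof. by rewrite expn_sum -big_mkcond /=; apply: eq_bigr => p _; rewrite expn1. Qed.

Lemma prod_g2 a :
  \prod_(0 <= p < a.*2.+1) (if prime p && (3 * p <= a.*2) then p else 1) <= prim (a.*2 %/ 3).
Proof.
rewrite /prim (@big_cat_nat _ _ _ (a.*2 %/ 3).+1 0 a.*2.+1) //=; last first.
  rewrite ltnS; apply: leq_div.
rewrite [X in _ * X]big1_seq ?muln1; last first.
  move=> p /andP [_]; rewrite mem_index_iota => /andP [h _].
  case: ifP => // /andP [_ h']; exfalso.
  have : p <= a.*2 %/ 3 by rewrite leq_divRL //; lia.
  lia.
rewrite [X in _ <= X]big_mkcond /= big_nat_cond [X in _ <= X]big_nat_cond; apply: leq_prod => p /andP [/andP [_ h] _].
case: (prime p) => //=; rewrite ifT //.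
have : p <= a.*2 %/ 3 by lia.
rewrite leq_divRL //; lia.
Qed.

Definition Ssm a := \sum_(0 <= p < a.*2.+1 | prime p && (p * p <= a.*2)) 1.
Definition Nbig a := \sum_(0 <= p < a.*2.+1 | prime p && (a < p)) 1.

Lemma prod_gg_le a : 2 < a ->
  \prod_(0 <= p < a.*2.+1) gg a p <= a.*2 ^ Ssm a * prim (a.*2 %/ 3) * a.*2 ^ Nbig a.
Proof.
move=> a2.
apply: leq_trans (_ : _ <= \prod_(0 <= p < a.*2.+1)
   ((if prime p && (p * p <= a.*2) then a.*2 else 1) *
    (if prime p && (3 * p <= a.*2) then p else 1) *
    (if prime p && (a < p) then a.*2 else 1))) _.
  apply: leq_prod => p _; rewrite /gg.
  case pp: (prime p) => //=; have := prime_gt0 pp => p0.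
  case: ifP => h1.
    rewrite -!mulnA; apply: leq_pmulr.
    by rewrite muln_gt0; apply/andP; split; case: ifP => //; lia.
  case: ifP => h2.
    rewrite ifF; last by apply/negP => h; nia.
    by rewrite mul1n muln1.
  case: ifP => h3; first by rewrite !muln_gt0; repeat case: ifP => //; lia.
  case: ifP => h4; last by rewrite !muln_gt0; repeat case: ifP => //; lia.
  by rewrite ifT //; lia.
rewrite !big_split /= !prod_const_cond.
apply: leq_mul => //; apply: leq_mul => //; exact: prod_g2.
Qed.

Lemma expn_monol m n e : m <= n -> m ^ e <= n ^ e.
Proof. move=> h; elim: e => // e IH; rewrite !expnS; exact: leq_mul. Qed.

Lemma erdos a : 2 < a ->
  4 ^ a <= a.*2.+1 * (a.*2 ^ Ssm a * 4 ^ (a.*2 %/ 3) * a.*2 ^ Nbig a).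
Proof.
move=> a2; apply: leq_trans (central_lb a) _; apply: leq_mul => //.
apply: leq_trans (bin_le_prod_gg a2) _.
apply: leq_trans (prod_gg_le a2) _.
apply: leq_mul => //; apply: leq_mul => //; exact: prim_le.
Qed.

Lemma arith_u u : 9 <= u -> 3 * (u.*2 + 3) * (1 + 4 * 2 ^ u) <= 2 ^ u.*2.
Proof.
elim: u => // u IH hu.
case: (ltnP u 9) => hu9.
  have -> : u = 8 by lia.
  by [].
have := IH hu9.
have -> : (u.+1).*2 = (u.*2).+2 by lia.
rewrite !expnS; set x := 2 ^ u; set y := 2 ^ u.*2.
nia.
Qed.

Lemma Ssm_le a : 0 < a -> Ssm a <= 2 ^ ((trunc_log 2 a)./2).+2.
Proof.
move=> a0; rewrite /Ssm.
set b := trunc_log 2 a; set u := b./2.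
have hb : a < 2 ^ b.+1 := trunc_log_ltn a (ltnSn 1).
apply: leq_trans (sum_ind_le (T := 2 ^ u.+2) _) _; last lia.
move=> p _ /andP [_ hp]; rewrite ltnNge; apply/negP => h.
have h2 : 2 ^ u.+2 * 2 ^ u.+2 <= p * p by apply: leq_mul.
rewrite -expnD in h2.
have h3 : 2 ^ b.+2 <= 2 ^ (u.+2 + u.+2) by apply: leq_pexp2l => //; rewrite /u; lia.
have : 2 ^ b.+2 = (2 ^ b.+1).*2 by rewrite expnS; lia.
lia.
Qed.

Lemma four_pow n : 4 ^ n = 2 ^ n.*2.
Proof. by rewrite -mul2n expnM. Qed.

Lemma cheb a : 2 ^ 18 <= a -> a <= 6 * trunc_log 2 a * Nbig a.
Proof.
move=> ha.
have a2 : 2 < a by apply: leq_trans ha.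
have a0 : 0 < a by lia.
set b := trunc_log 2 a.
have hb1 : 2 ^ b <= a := trunc_logP (ltnSn 1) a0.
have hb2 : a < 2 ^ b.+1 := trunc_log_ltn a (ltnSn 1).
have b18 : 18 <= b by apply: trunc_log_max.
set u := b./2.
have u9 : 9 <= u by rewrite /u; lia.
have hS := Ssm_le a0; rewrite -/b -/u in hS.
have hA := arith_u u9.
set t := b.+2.
have ht : a.*2 < 2 ^ t by rewrite /t expnS; lia.
have E := erdos a2.
have E1 : a.*2 ^ Ssm a <= 2 ^ (t * Ssm a) by rewrite expnM; apply: expn_monol; lia.
have E2 : a.*2 ^ Nbig a <= 2 ^ (t * Nbig a) by rewrite expnM; apply: expn_monol; lia.
have E3 : a.*2.+1 <= 2 ^ t by [].
have E4 : 4 ^ (a.*2 %/ 3) = 2 ^ ((a.*2 %/ 3).*2) by rewrite four_pow.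
have E5 : 4 ^ a = 2 ^ a.*2 by rewrite four_pow.
have : 2 ^ a.*2 <= 2 ^ (t + (t * Ssm a + (a.*2 %/ 3).*2 + t * Nbig a)).
  move: E1 E2 E4; set x := t * Ssm a; set z := t * Nbig a; set y := (a.*2 %/ 3).*2.
  move=> E1 E2 E4.
  rewrite -E5 expnD (expnD 2 (x + y)) (expnD 2 x); apply: leq_trans E _.
  apply: leq_mul; first exact: E3.
  apply: leq_mul; last exact: E2. rewrite -E4; apply: leq_mul => //; exact: E1.
rewrite leq_exp2l // => H.
have hu2 : 2 ^ u.*2 <= a by apply: leq_trans hb1; apply: leq_pexp2l => //; rewrite /u; lia.
have hW : t * (1 + Ssm a) <= (u.*2 + 3) * (1 + 4 * 2 ^ u).
  apply: leq_mul; first by rewrite /t /u; lia.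
  by rewrite expnS expnS in hS; lia.
have hP : 3 * ((u.*2 + 3) * (1 + 4 * 2 ^ u)) <= a by rewrite mulnA; apply: leq_trans hA hu2.
have hW' : t + t * Ssm a <= (u.*2 + 3) * (1 + 4 * 2 ^ u) by rewrite mulnDr muln1 in hW.
have hTN : t * Nbig a <= (b * Nbig a).*2 by rewrite -mul2n mulnA; apply: leq_mul => //; rewrite /t; lia.
move: H hP hW' hTN.
set P := (u.*2 + 3) * (1 + 4 * 2 ^ u); set TN := t * Nbig a; set TS := t * Ssm a; set BN := b * Nbig a.
rewrite mulnAC -mulnA -/BN.
lia.
Qed.

Lemma L1 M : (M %/ 2).*2 <= M <= (M %/ 2).*2.+1.
Proof. lia. Qed.

Lemma L2 q M : 2 * q < M.+1 -> q <= M %/ 2.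
Proof. lia. Qed.

Lemma L3 x D n : x <= D -> 0 < n -> x <= D * (n * n).
Proof. move=> h n0; apply: leq_trans h _; apply: leq_pmulr; by rewrite muln_gt0 n0. Qed.

Lemma L4 q M : 0 < q -> 2 * q <= M -> (M %/ q).+1 * q <= 2 * M.
Proof.
move=> q0 h; have := leq_divM M q; rewrite mulSn; lia.
Qed.

Lemma L5 s n D M : 0 < n -> 1 < D -> M <= s * n -> 2 * (D * (n * n)) <= M ->
  (M %/ (D * (n * n))).+1 <= s.
Proof.
move=> n0 D1 h1 h2.
have q0 : 0 < D * (n * n) by rewrite !muln_gt0 n0; lia.
set t := M %/ (D * (n * n)).
have ht : t * (D * (n * n)) <= M := leq_divM _ _.
have t1 : 1 <= t by rewrite /t leq_divRL //; lia.
rewrite -(leq_pmul2r n0); apply: leq_trans h1; apply: leq_trans ht.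
have : t.+1 <= t * D by nia.
move=> h; rewrite mulnA; apply: leq_mul => //; nia.
Qed.

Lemma L6 a b cnt d K n : 2 ^ b <= a -> 0 < b -> a ^ cnt <= d -> d <= 2 ^ (K * n) ->
  cnt <= (K * n) %/ b.
Proof.
move=> h1 b0 h2 h3; rewrite leq_divRL //.
rewrite -(leq_exp2l _ _ (ltnSn 1)) mulnC expnM.
apply: leq_trans h3; apply: leq_trans h2; elim: cnt => // c IH; rewrite !expnS; exact: leq_mul.
Qed.

Lemma L7 cb m L N : cb * m.+1 <= 2 * (L * (m * m)) -> 20 * L * m <= N -> 10 * cb <= N.
Proof.
move=> h1 h2.
have : cb * m.+1 <= (2 * L * m) * m.+1 by apply: leq_trans h1 _; nia.
rewrite leq_pmul2r // => h; lia.
Qed.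

Lemma L8 m u c : 2 * c <= m -> m <= u + c -> m <= 2 * u.
Proof. lia. Qed.

Lemma key_arith L b K n m M a Nb N D :
  0 < b -> 0 < n -> L * b <= K * n -> m * (D * (n * n)) <= 2 * M ->
  M <= 3 * a -> a <= 6 * b * Nb -> Nb <= N -> 720 * K <= D -> b <= n -> 0 < D ->
  20 * L * m <= N.
Proof.
move=> b0 n0 h1 h2 h3 h4 h5 h6 h7 D0.
have E1 : (20 * L * m) * (b * (D * (n * n))) <= 720 * K * n * b * N.
  have -> : (20 * L * m) * (b * (D * (n * n))) = 20 * (L * b) * (m * (D * (n * n))) by ring.
  apply: leq_trans (_ : _ <= 20 * (K * n) * (2 * (3 * (6 * b * N)))) _; last first.
    by rewrite (_ : 20 * (K * n) * (2 * (3 * (6 * b * N))) = 720 * K * n * b * N) //; ring.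
  apply: leq_mul; first by apply: leq_mul.
  apply: leq_trans h2 _; rewrite leq_mul2l /=; apply: leq_trans h3 _.
  rewrite leq_mul2l /=; apply: leq_trans h4 _; apply: leq_mul => //.
have E2 : 720 * K * n * b * N <= N * (b * (D * (n * n))).
  have -> : N * (b * (D * (n * n))) = (D * n) * n * b * N by ring.
  apply: leq_mul => //; apply: leq_mul => //.
  have : 720 * K * n <= D * n by apply: leq_mul.
  move=> h; apply: leq_trans h _; exact: leq_pmulr.
have := leq_trans E1 E2; rewrite leq_pmul2r //; by rewrite !muln_gt0 b0 n0 D0.
Qed.

Lemma L9 n : 2 * n <= 2 ^ n.
Proof.
elim: n => // n IH; rewrite expnS.
have : 0 < 2 ^ n by rewrite expn_gt0.
case: n IH => [|n] IH h; first by [].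
have : 2 <= 2 ^ n.+1 by rewrite expnS; have := expn_gt0 2 n; lia.
lia.
Qed.

Lemma L10 a : 0 < a -> a.*2.+1 <= 3 * a.
Proof. lia. Qed.

Lemma L11 cg cb N : cb + cg = N -> 10 * cb <= N -> 9 * N <= cg * 10.
Proof. lia. Qed.

Local Open Scope ring_scope.

Fixpoint coll (p : nat) (s : seq int) : nat :=
  match s with
  | [::] => 0
  | x :: r => (count (fun y : int => (p%:Z %| (y - x)%R)%Z) r + coll p r)%N
  end.

Lemma undup_coll p s :
  (size s <= size (undup [seq (x %% p%:Z)%Z | x <- s]) + coll p s)%N.
Proof.
elim: s => //= x r IH.
case: ifP => h /=.
  have : (0 < count (fun y : int => (p%:Z %| (y - x)%R)%Z) r)%N.
    rewrite -has_count; case/mapP: h => y yr e.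
    apply/hasP; exists y => //; rewrite -eqz_mod_dvd; apply/eqP; by rewrite e.
  move=> hc; move: IH hc; set c := count _ _; set d := coll p r; set e := size (undup _); lia.
lia.
Qed.

Lemma count_sum (T : Type) (q : pred T) r : count q r = (\sum_(y <- r) (q y : nat))%N.
Proof. by rewrite -sum1_count big_mkcond. Qed.

Lemma sum_coll (P : seq nat) s L : uniq s ->
  (forall x y, x \in s -> y \in s -> x != y ->
     (count (fun p : nat => (p%:Z %| (y - x)%R)%Z) P <= L)%N) ->
  (\sum_(p <- P) coll p s <= L * (size s * size s))%N.
Proof.
elim: s => [|x r IH] /=; first by rewrite big1.
move=> /andP [xr ur] H.
rewrite big_split /=.
have IH' := IH ur (fun x' y' hx hy => H x' y' (mem_behead (s:=x::r) hx) (mem_behead (s:=x::r) hy)).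
have h1 : (\sum_(p <- P) count (fun y : int => (p%:Z %| (y - x)%R)%Z) r <= L * size r)%N.
  under eq_bigr => p _ do rewrite count_sum.
  rewrite exchange_big /=.
  apply: leq_trans (_ : _ <= \sum_(y <- r) L)%N _; last by rewrite big_const_seq count_predT iter_addn_0 mulnC.
  rewrite [X in (X <= _)%N](big_seq) [X in (_ <= X)%N](big_seq); apply: leq_sum => y yr.
  rewrite -count_sum; apply: H; rewrite ?mem_head ?in_cons ?yr ?orbT //.
  by apply/eqP => exy; rewrite exy yr in xr.
move: h1 IH'; set A := (\sum_(p <- P) _)%N; set B := (\sum_(p <- P) _)%N; set n := size r.
rewrite /=; nia.
Qed.

Lemma pow_le_prod (P : seq nat) (q : pred nat) a :
  (forall p, p \in P -> a <= p)%N -> (a ^ count q P <= \prod_(p <- P | q p) p)%N.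
Proof.
elim: P => [|x r IH] H /=; first by rewrite big_nil.
rewrite big_cons; have IH' := IH (fun p hp => H p (mem_behead (s:=x::r) hp)).
case: (q x) => /=; last by rewrite add0n.
rewrite add1n expnS; apply: leq_mul => //; apply: H; exact: mem_head.
Qed.

Lemma cnt_div (P : seq nat) a (d : nat) : uniq P ->
  (forall p, p \in P -> prime p /\ (a <= p)%N) -> (0 < d)%N ->
  (a ^ count (fun p => p %| d) P <= d)%N.
Proof.
move=> uP H d0; apply: leq_trans (pow_le_prod _ (fun p hp => proj2 (H p hp))) _.
apply: dvdn_leq => //; apply: prod_primes_dvd => // p hp qp; split => //; exact: (proj1 (H p hp)).
Qed.

Lemma bad_count (P : seq nat) (f : nat -> nat) m :
  (count (fun p => m < 2 * f p)%N P * m.+1 <= 2 * \sum_(p <- P) f p)%N.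
Proof.
elim: P => [|x r IH] /=; first by rewrite big_nil.
rewrite big_cons; case: ltnP => h /=; lia.
Qed.

Lemma poszMn (B n : nat) : B%:Z *+ n = (B * n)%:Z.
Proof. elim: n => [|n IH]; first by rewrite muln0. by rewrite mulrS IH mulnS PoszD. Qed.

Lemma wsub_bound (Q : seq int) (B : nat) (A : {set 'I_(size Q)}) :
  (forall q, q \in Q -> `|q| <= B%:Z) -> `|wsub A| <= (size Q * B)%:Z.
Proof.
move=> H; rewrite /wsub.
apply: le_trans (ler_norm_sum _ _ _) _.
apply: le_trans (_ : _ <= \sum_(i in A) (B%:Z)) _.
  by apply: ler_sum => i _; apply: H; apply: mem_nth.
rewrite sumr_const poszMn lez_nat mulnC.
apply: leq_mul => //; rewrite -[X in (_ <= X)%N]card_ord; exact: max_card.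
Qed.

Lemma size_wpow Q : (size (wpow Q) <= 2 ^ size Q)%N.
Proof.
rewrite /wpow; apply: leq_trans (size_undup _) _.
rewrite size_map -cardE -cardsT -powersetT card_powerset cardsT card_ord //.
Qed.

Lemma mem_wbinom Q k s : s \in wbinom Q k ->
  exists A : {set 'I_(size Q)}, #|A| = k /\ s = wsub A.
Proof.
rewrite /wbinom mem_undup => /mapP [A]; rewrite mem_enum inE => /eqP hA ->.
by exists A.
Qed.

Lemma mem_kres Q k p (A : {set 'I_(size Q)}) : #|A| = k ->
  (wsub A %% p%:Z)%Z \in kres Q k p.
Proof.
move=> hA; rewrite /kres mem_undup; apply/mapP; exists A => //.
by rewrite mem_enum inE hA.
Qed.

Lemma kres_gt0 Q k p : (k <= size Q)%N -> (0 < size (kres Q k p))%N.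
Proof.
move=> hk.
have : (0 < #|[set A : {set 'I_(size Q)} | #|A| == k]|)%N.
  by rewrite card_draws card_ord bin_gt0.
rewrite card_gt0 => /set0Pn [A]; rewrite inE => /eqP hA.
have := mem_kres p hA; case: (kres Q k p) => //.
Qed.

Lemma Nbig_le (R : realType) (X : R) a : 0 <= X ->
  (a.*2 <= Num.truncn X <= a.*2.+1)%N -> (Nbig a <= size (primes_in X))%N.
Proof.
move=> X0 ha.
set M := Num.truncn X in ha.
have hM1 : M%:R <= X by rewrite truncn_le.
have hM2 : X < M.+1%:R by apply: truncnS_gt.
rewrite /Nbig -big_filter sum1_count /index_iota subn0 /primes_in size_filter.
have -> : (M.+1 = a.*2.+1 + (M - a.*2))%N by lia.
rewrite iotaD count_cat; apply: leq_trans (leq_addr _ _).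
rewrite count_filter.
rewrite (@eq_in_count _ _ (fun p => (prime p && (a < p)%N) && (prime p && (X / 2 <= p%:R) && (p%:R <= X)))).
  by apply: sub_count => p /andP [_ ->].
move=> p; rewrite mem_iota add0n => /andP [_ hp].
rewrite /=; case: (prime p) => //=; case hap: (a < p)%N => //=; symmetry; apply/andP; split.
  rewrite ler_pdivrMr // ; apply: le_trans (ltW hM2) _; rewrite -natrM ler_nat; lia.
apply: le_trans hM1; rewrite ler_nat; lia.
Qed.

Lemma mem_primes_in (R : realType) (X : R) p : p \in primes_in X ->
  [/\ prime p, X / 2 <= p%:R & p%:R <= X].
Proof. by rewrite mem_filter => /andP [/andP [/andP [pp h1] h2] _]. Qed.

Unset Implicit Arguments.

Theorem mainTheorem8 (R : realType) (c : R) (hc : 0 < c) :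
  exists C : R, 0 < C /\
  forall (n : nat) (Q : seq int) (k : nat) (X : R),
    uniq Q ->
    (size Q <= n)%N ->
    (forall q, q \in Q -> `|(q%:~R : R)| <= 2 `^ (c * n%:R)) ->
    (1 <= k <= size Q)%N ->
    (size (wpow Q))%:R / (size Q)%:R <= (size (wbinom Q k))%:R :> R ->
    4 <= X -> X <= (size (wpow Q))%:R ->
    ((9 : R) / 10) * (size (primes_in X))%:R <=
      (size [seq p <- primes_in X |
               (p%:R : R) / (C * n%:R ^+ 2) <= (size (kres Q k p))%:R])%:R :> R.
Proof.
set K := (Num.truncn c).+2.
pose D := (2 ^ 18 * K)%N.
have D0 : (0 < D)%N by rewrite /D muln_gt0 expn_gt0.
have D18 : (2 ^ 18 <= D)%N by rewrite /D leq_pmulr.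
have D720 : (720 * K <= D)%N by rewrite /D leq_mul2r; apply/orP; right.
clearbody D.
exists (2 * D)%:R; split; first by rewrite ltr0n muln_gt0 D0.
move=> n Q k X uQ hn hq hk hS h4 hX.
have hQ1 : (1 <= size Q)%N by lia.
have n1 : (1 <= n)%N by lia.
set B := (2 ^ (K.-1 * n))%N.
have hqB : forall q, q \in Q -> `|q| <= B%:Z.
  move=> q /hq h; rewrite -(ler_int R) intr_norm.
  apply: le_trans h _.
  rewrite -[(B%:Z)%:~R]/(B%:R : R) /B natrX -powR_mulrn // natrM; apply: ler_powR; first by rewrite ler1n.
  apply: ler_wpM2r => //; rewrite /K /=; apply: ltW; exact: truncnS_gt.
have hsub : forall A : {set 'I_(size Q)}, `|wsub A| <= (n * B)%:Z.
  move=> A; apply: le_trans (wsub_bound A hqB) _; rewrite lez_nat leq_mul2r; lia.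
have X0 : 0 <= X by apply: le_trans h4.
set M := Num.truncn X.
have hM1 : M%:R <= X by rewrite truncn_le.
have hM2 : X < M.+1%:R by apply: truncnS_gt.
have M4 : (4 <= M)%N by rewrite truncn_ge_nat.
have hQ0 : 0 < (size Q)%:R :> R by rewrite ltr0n; lia.
have hSn : (M <= size (wbinom Q k) * n)%N.
  rewrite -(ler_nat R); apply: le_trans hM1 _; apply: le_trans hX _.
  rewrite ler_pdivrMr // in hS; apply: le_trans hS _.
  by rewrite natrM ler_wpM2l // ler_nat.
have hMn : (M <= 2 ^ n)%N.
  rewrite -(ler_nat R); apply: le_trans hM1 _; apply: le_trans hX _.
  rewrite ler_nat; apply: leq_trans (size_wpow Q) _; apply: leq_pexp2l => //.
case: (lerP X ((2 * D)%:R * n%:R ^+ 2)) => hX2.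
  rewrite (_ : [seq _ <- _ | _] = primes_in X); last first.
    apply/all_filterP/allP => p /mem_primes_in [pp _ hp].
    have hp0 : 0 < (2 * D)%:R * n%:R ^+ 2 :> R.
      by rewrite mulr_gt0 // ?exprn_gt0 ?ltr0n ?muln_gt0 ?D0 //; lia.
    rewrite ler_pdivrMr //; apply: le_trans (le_trans hp hX2) _.
    apply: ler_peMl; [exact: ltW | rewrite ler1n; apply: kres_gt0; by case/andP: hk].
  rewrite ler_piMl // ler_pdivrMr // mul1r ler_nat //.
have q0 : (0 < D * (n * n))%N by rewrite muln_gt0 D0 muln_gt0 n1.
have hMD : (2 * D * (n * n) < M.+1)%N.
  rewrite -(ltr_nat R); apply: lt_trans hM2; apply: le_lt_trans _ hX2.
  by rewrite !natrM expr2 mulrA.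
set a := (M %/ 2)%N.
have ha : (a.*2 <= M <= a.*2.+1)%N := L1 M.
have ha18 : (2 ^ 18 <= a)%N.
  apply: leq_trans (@L2 (D * (n * n)) M _); last by rewrite mulnA; exact: hMD.
  exact: L3.
set b := trunc_log 2 a.
have hcheb := cheb ha18; rewrite -/b in hcheb.
have a0 : (0 < a)%N by apply: leq_trans ha18; rewrite expn_gt0.
have hb1 : (2 ^ b <= a)%N by apply: trunc_logP.
have b1 : (0 < b)%N by apply: trunc_log_max => //; apply: leq_trans ha18; rewrite leq_exp2l.
have haM : (a <= M)%N by case/andP: ha => h _; apply: leq_trans h; rewrite -addnn leq_addr.
have hbn : (b <= n)%N.
  by rewrite -(leq_exp2l _ _ (ltnSn 1)); apply: leq_trans hb1 (leq_trans haM hMn).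
set P := primes_in X.
have uP : uniq P by apply: filter_uniq; apply: iota_uniq.
have hPa : forall p, p \in P -> prime p /\ (a <= p)%N.
  move=> p /mem_primes_in [pp h1 _]; split => //.
  rewrite -leq_double -(ler_nat R); apply: le_trans (_ : _ <= M%:R) _.
    by rewrite ler_nat; case/andP: ha.
  apply: le_trans hM1 _; rewrite ler_pdivrMr // in h1; apply: le_trans h1 _.
  by rewrite -muln2 natrM.
have hNb : (Nbig a <= size P)%N by apply: Nbig_le.
set S := wbinom Q k.
set q := (D * (n * n))%N.
set m := (M %/ q).+1.
have D1 : (1 < D)%N by apply: leq_trans D18.
have h2q : (2 * q <= M)%N by rewrite /q mulnA; exact: hMD.
have hm : (m <= size S)%N by apply: L5.
set S' := take m S.
have hS'm : size S' = m by rewrite size_takel.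
have uS' : uniq S' by apply: take_uniq; apply: undup_uniq.
have hS'S : {subset S' <= S} by move=> x; apply: mem_take.
set L := ((K * n) %/ b)%N.
have hdiff : forall x y, x \in S' -> y \in S' -> x != y ->
    (count (fun p : nat => (p%:Z %| (y - x)%R)%Z) P <= L)%N.
  move=> x y /hS'S /mem_wbinom [A [_ ->]] /hS'S /mem_wbinom [A' [_ ->]] hne.
  set d := (`|wsub A' - wsub A|)%N.
  have d0 : (0 < d)%N by rewrite absz_gt0 subr_eq0 eq_sym.
  have hd : (d <= 2 ^ (K * n))%N.
    rewrite -lez_nat abszE; apply: le_trans (ler_normB _ _) _.
    apply: le_trans (lerD (hsub A') (hsub A)) _.
    rewrite -PoszD lez_nat -mulnDl addnn -mul2n /B.
    have -> : (K * n = n + K.-1 * n)%N by rewrite /K /=; ring.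
    rewrite expnD; apply: leq_mul => //.
    exact: L9.
  have -> : count (fun p : nat => (p%:Z %| (wsub A' - wsub A)%R)%Z) P = count (fun p => p %| d)%N P.
    by apply: eq_count => p; rewrite dvdzE absz_nat.
  apply: L6 hb1 b1 _ hd.
  exact: cnt_div.
have hsum := sum_coll uS' hdiff.
set cb := count (fun p => m < 2 * coll p S')%N P.
have hcb : (cb * m.+1 <= 2 * (L * (m * m)))%N.
  apply: leq_trans (bad_count P (fun p => coll p S') m) _.
  by rewrite leq_mul2l /= -hS'm.
have hkey : (20 * L * m <= size P)%N.
  apply: (key_arith (b := b) (K := K) (n := n) (D := D) (M := M) (a := a) (Nb := Nbig a)) => //.
  - exact: leq_divM.
  - exact: L4.
  - by case/andP: ha => _ h; apply: leq_trans h (L10 a0).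
have h10 : (10 * cb <= size P)%N := L7 hcb hkey.
have hgood : forall p, p \in P -> ~~ (m < 2 * coll p S')%N ->
    (p%:R : R) / ((2 * D)%:R * n%:R ^+ 2) <= (size (kres Q k p))%:R.
  move=> p /mem_primes_in [pp _ hpX]; rewrite -leqNgt => hcc.
  have hu : (size (undup [seq (x %% p%:Z)%Z | x <- S']) <= size (kres Q k p))%N.
    apply: uniq_leq_size; first exact: undup_uniq.
    move=> z; rewrite mem_undup => /mapP [x /hS'S /mem_wbinom [A [hA ->]] ->].
    exact: mem_kres.
  have hm2 : (m <= 2 * size (kres Q k p))%N.
    apply: L8 hcc _; rewrite -{1}hS'm; apply: leq_trans (undup_coll p S') _; by rewrite leq_add2r.
  have hp0 : 0 < (2 * D)%:R * n%:R ^+ 2 :> R.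
    by rewrite mulr_gt0 // ?exprn_gt0 ?ltr0n ?muln_gt0 ?D0.
  rewrite ler_pdivrMr //; apply: le_trans hpX _; apply: ltW; apply: lt_le_trans hM2 _.
  have hmq : (M < m * q)%N by rewrite /m ltn_ceil // /q muln_gt0 D0 muln_gt0 n1.
  apply: le_trans (_ : (m * q)%:R <= _); first by rewrite ler_nat.
  rewrite -natrX -!natrM ler_nat /q.
  have -> : (size (kres Q k p) * (2 * D * n ^ 2) = (2 * size (kres Q k p)) * (D * (n * n)))%N by ring.
  by rewrite leq_mul2r hm2 orbT.
rewrite size_filter.
apply: le_trans (_ : (9 : R) / 10 * (size P)%:R <= (count (predC (fun p => m < 2 * coll p S')%N) P)%:R) _.
  have hcc := count_predC (fun p => m < 2 * coll p S')%N P; rewrite -/cb in hcc.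
  rewrite mulrAC ler_pdivrMr // -[9 : R]/(9%:R) -[10 : R]/(10%:R) -!natrM ler_nat.
  exact: L11 hcc h10.
rewrite ler_nat.
set G := (fun p : nat => _ <= _).
rewrite (@eq_in_count _ _ (fun p => predC (fun p => m < 2 * coll p S')%N p && G p)).
  by apply: sub_count => p /andP [_ ->].
move=> p hp /=; case h: (m < 2 * coll p S')%N => //=.
by symmetry; apply/idP; apply: hgood hp _; rewrite h.
Qed.
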